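(* For any $1\le d\le n$ and $\mathcal{F}$ being any one of the four classes (1) all, (2) homogeneous, (3) $d$-homogeneous, (4) degree at most $d$, we have \[ \mathrm{qBr}_n(\mathcal{F}^q_n)\le \mathrm{Br}_n(\mathcal{F}_n)\qquad\text{and}\qquad \mathrm{Br}_{3n}(\mathcal{F}_{3n})\le 3\,\mathrm{qBr}_n(\mathcal{F}^q_n). \]
   Context: Every $f:\{-1,1\}^m\to\mathbb{C}$ expands as $f=\sum_{S\subset[m]}\widehat f(S)\chi_S$ with $\chi_S(x)=\prod_{j\in S}x_j$. $f$ is of degree $d$ if $\widehat f(S)=0$ for $|S|>d$, $d$-homogeneous if $\widehat f(S)=0$ for $|S|\ne d$, and homogeneous if it is $d$-homogeneous for some $d$. The Boolean radius $\mathrm{Br}_m(f)$ is the positive real number $r$ with $\sum_{S\subset[m]}|\widehat f(S)|r^{|S|}=\|f\|_\infty$, and for a class $\mathcal{F}$ of functions $\mathrm{Br}_m(\mathcal{F})=\inf\{\mathrm{Br}_m(f):f\in\mathcal{F}\}$. The classes of functions on $\{-1,1\}^m$: $\mathcal{F}_m(\mathrm{all})$ all functions, $\mathcal{F}_m(\mathrm{hom})$ all homogeneous functions, $\mathcal{F}_m(=d)$ all $d$-homogeneous functions, $\mathcal{F}_m(\le d)$ all functions of degree at most $d$. Quantum setting: with Pauli matrices $\sigma_0=I_2$, $\sigma_1=\begin{pmatrix}0&1\\1&0\end{pmatrix}$, $\sigma_2=\begin{pmatrix}0&-i\\ i&0\end{pmatrix}$, $\sigma_3=\begin{pmatrix}1&0\\0&-1\end{pmatrix}$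 and $\sigma_{\mathbf{s}}=\sigma_{s_1}\otimes\cdots\otimes\sigma_{s_n}$ for $\mathbf{s}\in\{0,1,2,3\}^n$, every $A\in M_2(\mathbb{C})^{\otimes n}$ expands uniquely as $A=\sum_{\mathbf{s}}\widehat A_{\mathbf{s}}\sigma_{\mathbf{s}}$; $|\mathbf{s}|$ is the number of nonzero entries. Degree $d$, $d$-homogeneous and homogeneous are defined analogously using $|\mathbf{s}|$. The quantum Boolean radius $\mathrm{qBr}_n(A)$ is the positive real $r$ with $\sum_{\mathbf{s}}|\widehat A_{\mathbf{s}}|r^{|\mathbf{s}|}=\|A\|$ (operator norm), and $\mathrm{qBr}_n(\mathcal{F}')=\inf\{\mathrm{qBr}_n(A):A\in\mathcal{F}'\}$. For each class $\mathcal{F}_n$ above, $\mathcal{F}^q_n$ denotes the corresponding class of matrices in $M_2(\mathbb{C})^{\otimes n}$ (all, homogeneous, $d$-homogeneous, degree at most $d$). *)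

(* Defs.v *)
From HB Require Import structures.
From mathcomp Require Import all_boot all_order all_algebra.
From mathcomp Require Import complex.
From mathcomp Require Import boolp classical_sets reals constructive_ereal ereal.
Set Implicit Arguments. Unset Strict Implicit. Unset Printing Implicit Defensive.
Import Order.TTheory GRing.Theory Num.Theory.
Local Open Scope ring_scope.
Local Open Scope classical_set_scope.

Section Defs.
Variable R : realType.
Local Notation C := R[i].
Local Notation normc := (@ComplexField.Normc.normc R).

(* The Boolean cube {-1,1}^m, encoded as bool vectors: x j = true means x_j = -1;
   the same type encodes the computational basis {0,1}^n of (C^2)^{⊗n}. *)
Definition cube (m : nat) := {ffun 'I_m -> bool}.

Definition sgnb (b : bool) : C := if b then -1 else 1.

Definition chi (m : nat) (S : {set 'I_m}) (x : cube m) : C :=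
  \prod_(j in S) sgnb (x j).

Definition fourier (m : nat) (f : cube m -> C) (S : {set 'I_m}) : C :=
  (2 ^+ m)^-1 * \sum_(x : cube m) f x * chi S x.

Definition supnorm (m : nat) (f : cube m -> C) : R :=
  \big[Num.max/0]_(x : cube m) normc (f x).

(* Boolean radius: the positive r with sum_S |fhat S| r^|S| = ||f||_oo
   (taken as a sup in \bar R; it is +oo exactly when f is constant). *)
Definition Br (m : nat) (f : cube m -> C) : \bar R :=
  ereal_sup [set r%:E | r in [set r : R | 0 < r /\
     \sum_(S : {set 'I_m}) normc (fourier f S) * r ^+ #|S| = supnorm f]].

Inductive fclass := Fall | Fhom | Feq | Fle.

Definition in_class (c : fclass) (d : nat) (I : finType) (wt : I -> nat)
    (coef : I -> C) : Prop :=
  match c with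
  | Fall => True
  | Fhom => exists e : nat, forall i, coef i != 0 -> wt i = e
  | Feq => forall i, coef i != 0 -> wt i = d
  | Fle => forall i, coef i != 0 -> (wt i <= d)%N
  end.

Definition Br_class (c : fclass) (d m : nat) : \bar R :=
  ereal_inf [set Br f | f in [set f : cube m -> C |
     in_class c d (fun S : {set 'I_m} => #|S|) (fourier f)]].

(* Pauli matrices sigma_0..sigma_3, entries indexed by bool (false = 0, true = 1) *)
Definition pauli (a : 'I_4) (x y : bool) : C :=
  match nat_of_ord a with
  | 0 => if x == y then 1 else 0
  | 1 => if x != y then 1 else 0
  | 2 => if x == y then 0 else (if x then 'i else - 'i)
  | _ => if x == y then (if x then -1 else 1) else 0
  end.

(* An element of M_2(C)^{⊗n}, as a matrix indexed by the basis {0,1}^n: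
   A x y is the (x,y) entry (Kronecker-product convention). *)
Definition qop (n : nat) := cube n -> cube n -> C.

Definition pidx (n : nat) := {ffun 'I_n -> 'I_4}.

Definition pauli_string (n : nat) (s : pidx n) : qop n :=
  fun x y => \prod_(k < n) pauli (s k) (x k) (y k).

Definition pweight (n : nat) (s : pidx n) : nat := #|[set k | s k != ord0]|.

Definition pcoef (n : nat) (A : qop n) (s : pidx n) : C :=
  (2 ^+ n)^-1 * \sum_(x : cube n) \sum_(y : cube n) pauli_string s x y * A y x.

Definition vnorm (n : nat) (v : cube n -> C) : R :=
  Num.sqrt (\sum_(x : cube n) normc (v x) ^+ 2).

Definition apply (n : nat) (A : qop n) (v : cube n -> C) : cube n -> C :=
  fun x => \sum_(y : cube n) A x y * v y.

Definition opnorm (n : nat) (A : qop n) : R :=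
  sup [set vnorm (apply A v) | v in [set v : cube n -> C | vnorm v = 1]].

Definition qBr (n : nat) (A : qop n) : \bar R :=
  ereal_sup [set r%:E | r in [set r : R | 0 < r /\
     \sum_(s : pidx n) normc (pcoef A s) * r ^+ pweight s = opnorm A]].

Definition qBr_class (c : fclass) (d n : nat) : \bar R :=
  ereal_inf [set qBr A | A in [set A : qop n |
     in_class c d (@pweight n) (pcoef A)]].

End Defs.

(* Main.v *)
Require Import Defs.
From HB Require Import structures.
From mathcomp Require Import all_boot all_order all_algebra.
From mathcomp Require Import complex.
From mathcomp Require Import boolp classical_sets reals constructive_ereal ereal.
From mathcomp Require Import topology normedtype derive.
From mathcomp Require Import ring lra.
Set Implicit Arguments. Unset Strict Implicit. Unset Printing Implicit Defensive.
Import Order.TTheory GRing.Theory Num.Theory.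
Import numFieldNormedType.Exports.
Local Open Scope ring_scope.
Local Open Scope complex_scope.

Section A.
Variable R : realType.
Local Notation C := R[i].
Local Notation normc := (@ComplexField.Normc.normc R).
Local Notation sgnb := (@sgnb R).
Local Notation chi := (@chi R).
Local Notation pauli := (@pauli R).
Local Notation pauli_string := (@pauli_string R).

Lemma nC (z : C) : (normc z)%:C = `|z|.
Proof. by case: z => a b; rewrite normc_def. Qed.

Lemma normc_ge0 (z : C) : 0 <= normc z.
Proof. by case: z => a b; exact: sqrtr_ge0. Qed.

Lemma normc_add (x y : C) : normc (x + y) <= normc x + normc y.
Proof. by rewrite -lecR rmorphD /= !nC; exact: ler_normD. Qed.

Lemma normc_sum (I : Type) (r : seq I) (P : pred I) (F : I -> C) :
  normc (\sum_(i <- r | P i) F i) <= \sum_(i <- r | P i) normc (F i).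
Proof.
apply: (big_ind2 (fun (a : C) (b : R) => normc a <= b)) => [|x1 x2 y1 y2 h1 h2|i _].
- by rewrite ComplexField.Normc.normc0.
- apply: le_trans (normc_add x1 y1) _; exact: lerD.
- done.
Qed.

Lemma normcC (x : R) : normc x%:C = `|x|.
Proof. by rewrite /= expr0n /= addr0 sqrtr_sqr. Qed.

Lemma normcJ' (z : C) : normc (conjc z) = normc z.
Proof. by case: z => a b /=; rewrite sqrrN. Qed.

Lemma normcM' (x y : C) : normc (x * y) = normc x * normc y.
Proof. exact: ComplexField.Normc.normcM. Qed.

Lemma normc_sgnb b : normc (sgnb b) = 1.
Proof.
case: b; rewrite /Defs.sgnb.
- by rewrite /= oppr0 expr0n /= addr0 sqrrN expr1n sqrtr1.
- by rewrite /= expr0n /= addr0 expr1n sqrtr1.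
Qed.

Lemma normc_i : normc 'i%C = 1.
Proof. by rewrite /= expr0n expr1n add0r sqrtr1. Qed.



Lemma le_sqrt_of_sqr (x y : R) : 0 <= y -> x ^+ 2 <= y -> x <= Num.sqrt y.
Proof.
move=> y0 h; apply: le_trans (ler_norm x) _.
by rewrite -sqrtr_sqr ler_sqrt.
Qed.

Lemma sum_sqr_le (I : Type) (r : seq I) (P : pred I) (a : I -> R) :
  (forall i, P i -> 0 <= a i) ->
  \sum_(i <- r | P i) a i ^+ 2 <= (\sum_(i <- r | P i) a i) ^+ 2 /\
  0 <= \sum_(i <- r | P i) a i.
Proof.
move=> a0.
apply: (big_ind2 (fun u v : R => u <= v ^+ 2 /\ 0 <= v)) => [|x1 y1 x2 y2 [h1 h1'] [h2 h2']|i Pi].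
- by rewrite expr0n /= lexx.
- split; last exact: addr_ge0.
  have := mulr_ge0 h1' h2'; nra.
- by rewrite lexx a0.
Qed.

Lemma CS_real (I : finType) (a b : I -> R) :
  \sum_i a i * b i <= Num.sqrt (\sum_i a i ^+ 2) * Num.sqrt (\sum_i b i ^+ 2).
Proof.
have Pge0 : 0 <= \sum_i a i ^+ 2 by apply: sumr_ge0 => i _; exact: sqr_ge0.
have Qge0 : 0 <= \sum_i b i ^+ 2 by apply: sumr_ge0 => i _; exact: sqr_ge0.
rewrite -sqrtrM //; apply: le_sqrt_of_sqr; first exact: mulr_ge0.
have H : 0 <= \sum_i \sum_j (a i * b j - a j * b i) ^+ 2.
  by apply: sumr_ge0 => i _; apply: sumr_ge0 => j _; exact: sqr_ge0.
have E : \sum_i \sum_j (a i * b j - a j * b i) ^+ 2 =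
   (\sum_i \sum_j (a i ^+ 2 * b j ^+ 2)) + (\sum_i \sum_j (a j ^+ 2 * b i ^+ 2))
   - 2%:R * \sum_i \sum_j (a i * b i) * (a j * b j).
  rewrite -big_split /= mulr_sumr -sumrB; apply: eq_bigr => i _.
  rewrite -big_split /= mulr_sumr -sumrB; apply: eq_bigr => j _.
  by rewrite /=; ring.
have E1 : \sum_i \sum_j (a i ^+ 2 * b j ^+ 2) = (\sum_i a i ^+ 2) * (\sum_i b i ^+ 2).
  by rewrite mulr_suml; apply: eq_bigr => i _; rewrite mulr_sumr.
have E2 : \sum_i \sum_j (a j ^+ 2 * b i ^+ 2) = (\sum_i a i ^+ 2) * (\sum_i b i ^+ 2).
  by rewrite exchange_big.
have E3 : \sum_i \sum_j (a i * b i) * (a j * b j) = (\sum_i a i * b i) ^+ 2.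
  by rewrite expr2 mulr_suml; apply: eq_bigr => i _; rewrite mulr_sumr.
move: H; rewrite E E1 E2 E3 => H.
nra.
Qed.

End A.

Section B.
Variable R : realType.
Local Notation C := R[i].
Local Notation normc := (@ComplexField.Normc.normc R).
Local Notation sgnb := (@sgnb R).
Local Notation chi := (@chi R).
Local Notation pauli := (@pauli R).
Local Notation pauli_string := (@pauli_string R).

Lemma vnorm_ge0 n (v : cube n -> C) : 0 <= vnorm v.
Proof. exact: sqrtr_ge0. Qed.

Lemma sumsq_ge0 n (v : cube n -> C) : 0 <= \sum_x normc (v x) ^+ 2.
Proof. by apply: sumr_ge0 => x _; exact: sqr_ge0. Qed.

Lemma vnorm_sq n (v : cube n -> C) : vnorm v ^+ 2 = \sum_x normc (v x) ^+ 2.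
Proof. by rewrite /vnorm sqr_sqrtr // sumsq_ge0. Qed.

Lemma coord_le n (v : cube n -> C) x : normc (v x) <= vnorm v.
Proof.
rewrite -[normc (v x)]ger0_norm ?normc_ge0 // -sqrtr_sqr /vnorm ler_sqrt ?sumsq_ge0 //.
rewrite (bigD1 x) //= lerDl; apply: sumr_ge0 => y _; exact: sqr_ge0.
Qed.

Lemma vnorm_le_sum n (v : cube n -> C) : vnorm v <= \sum_x normc (v x).
Proof.
have [h1 h2] := @sum_sqr_le R _ (index_enum (cube n)) xpredT (fun x => normc (v x))
   (fun x _ => normc_ge0 (v x)).
rewrite /vnorm -[X in _ <= X]ger0_norm // -sqrtr_sqr ler_sqrt //; exact: sqr_ge0.
Qed.

Lemma CS_complex n (p w : cube n -> C) :
  normc (\sum_z conjc (p z) * w z) <= vnorm p * vnorm w.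
Proof.
apply: le_trans (normc_sum _ _ _) _.
under eq_bigr => z _ do rewrite normcM' normcJ'.
exact: CS_real.
Qed.

Definition delta n (x0 : cube n) : cube n -> C := fun x => if x == x0 then 1 else 0.

Lemma vnorm_delta n (x0 : cube n) : vnorm (delta x0) = 1.
Proof.
rewrite /vnorm (bigD1 x0) //= big1 ?addr0.
  by rewrite /delta eqxx ComplexField.Normc.normc1 expr1n sqrtr1.
by move=> x /negbTE hx; rewrite /delta hx ComplexField.Normc.normc0 expr0n.
Qed.

Definition opset n (A : qop R n) :=
  [set vnorm (apply A v) | v in [set v : cube n -> C | vnorm v = 1]]%classic.

Lemma apply_bound n (A : qop R n) v : vnorm v = 1 ->
  vnorm (apply A v) <= \sum_x \sum_y normc (A x y).
Proof.
move=> hv; apply: le_trans (vnorm_le_sum _) _; apply: ler_sum => x _.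
apply: le_trans (normc_sum _ _ _) _; apply: ler_sum => y _.
rewrite normcM' -[X in _ <= X]mulr1; apply: ler_wpM2l; first exact: normc_ge0.
by rewrite -hv; exact: coord_le.
Qed.

Lemma has_sup_op n (A : qop R n) : has_sup (opset A).
Proof.
split.
  by exists (vnorm (apply A (delta [ffun => false]))); exists (delta [ffun => false]) => //; exact: vnorm_delta.
exists (\sum_x \sum_y normc (A x y)) => _ [v hv <-]; exact: apply_bound.
Qed.

Lemma opnorm_ub n (A : qop R n) v : vnorm v = 1 -> vnorm (apply A v) <= opnorm A.
Proof. by move=> hv; apply: (sup_upper_bound (has_sup_op A)); exists v. Qed.

Lemma opnorm_le n (A : qop R n) M :
  (forall v, vnorm v = 1 -> vnorm (apply A v) <= M) -> opnorm A <= M.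
Proof.
move=> h; apply: ge_sup; first exact: (has_sup_op A).1.
by move=> _ [v hv <-]; exact: h.
Qed.

Lemma opnorm_ge0 n (A : qop R n) : 0 <= opnorm A.
Proof.
apply: le_trans (opnorm_ub A (vnorm_delta [ffun => false])); exact: vnorm_ge0.
Qed.

End B.

Section P1.
Variable R : realType.
Local Notation C := R[i].
Local Notation normc := (@ComplexField.Normc.normc R).
Local Notation sgnb := (@sgnb R).
Local Notation chi := (@chi R).
Local Notation pauli := (@pauli R).
Local Notation pauli_string := (@pauli_string R).
Local Notation delta := (@delta R).

Lemma in_class_transfer c d (I J : finType) (wt1 : I -> nat) (coef1 : I -> C)
   (wt2 : J -> nat) (coef2 : J -> C) :
  (forall j, coef2 j != 0 -> exists i, coef1 i != 0 /\ wt2 j = wt1 i) ->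
  in_class c d wt1 coef1 -> in_class c d wt2 coef2.
Proof.
move=> h; case: c => //=.
- move=> [e he]; exists e => j /h [i [hi ->]]; exact: he.
- by move=> he j /h [i [hi ->]]; exact: he.
- by move=> he j /h [i [hi ->]]; exact: he.
Qed.

Definition diag n (f : cube n -> C) : qop R n := fun x y => if x == y then f x else 0.

Lemma apply_diag n (f : cube n -> C) v x : apply (diag f) v x = f x * v x.
Proof.
rewrite /apply (bigD1 x) //= /diag eqxx big1 ?addr0 // => y /negbTE.
by rewrite eq_sym => ->; rewrite mul0r.
Qed.

Lemma vnorm_cdelta n (x0 : cube n) (c0 : C) :
  vnorm (fun x => c0 * delta x0 x) = normc c0.
Proof.
rewrite /vnorm (bigD1 x0) //= big1 ?addr0.
  by rewrite /delta eqxx mulr1 sqrtr_sqr ger0_norm // normc_ge0.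
by move=> x /negbTE hx; rewrite /delta hx mulr0 ComplexField.Normc.normc0 expr0n.
Qed.

Lemma supnorm_ge0 m (f : cube m -> C) : 0 <= supnorm f.
Proof. by apply: le_trans (le_bigmax _ _ [ffun => false]); exact: normc_ge0. Qed.

Lemma supnorm_ub m (f : cube m -> C) x : normc (f x) <= supnorm f.
Proof. exact: le_bigmax. Qed.

Lemma supnorm_le m (f : cube m -> C) M : 0 <= M -> (forall x, normc (f x) <= M) -> supnorm f <= M.
Proof. by move=> M0 h; apply: bigmax_le. Qed.

Lemma supnorm_arg m (f : cube m -> C) : exists x, supnorm f = normc (f x).
Proof.
eexists; rewrite /supnorm (@bigmax_eq_arg _ _ _ 0 [ffun => false] xpredT) //.
by move=> i _; exact: normc_ge0.
Qed.

Lemma opnorm_diag n (f : cube n -> C) : opnorm (diag f) = supnorm f.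
Proof.
apply/eqP; rewrite eq_le; apply/andP; split.
  apply: opnorm_le => v hv.
  have M0 := supnorm_ge0 f.
  rewrite /vnorm -[X in _ <= X]ger0_norm // -sqrtr_sqr ler_sqrt ?sqr_ge0 //.
  have h1 : \sum_x normc (v x) ^+ 2 = 1 by rewrite -vnorm_sq hv expr1n.
  rewrite -[X in _ <= X]mulr1 -h1 mulr_sumr; apply: ler_sum => x _.
  rewrite apply_diag normcM' exprMn; apply: ler_wpM2r; first exact: sqr_ge0.
  by rewrite ler_sqr ?nnegrE ?normc_ge0 // supnorm_ub.
have [x0 ->] := supnorm_arg f.
have := opnorm_ub (diag f) (vnorm_delta R x0).
have -> : apply (diag f) (delta x0) = fun x => f x0 * delta x0 x.
  apply/funext => x; rewrite apply_diag /delta; case: eqP => [->|]//.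
  by rewrite !mulr0.
by rewrite vnorm_cdelta.
Qed.


Definition o3 : 'I_4 := @Ordinal 4 3 isT.
Definition sdiagP n (s : pidx n) := [forall k, (s k == ord0) || (s k == o3)].
Definition setof n (s : pidx n) : {set 'I_n} := [set k | s k != ord0].
Definition hS n (S : {set 'I_n}) : pidx n := [ffun k => if k \in S then o3 else ord0].

Lemma pauli_diag (a : 'I_4) b :
  pauli a b b = if a == ord0 then 1 else if a == o3 then sgnb b else 0.
Proof. by case: a => [[|[|[|[|a]]]] ha] //; case: b. Qed.

Lemma pstring_diag n (s : pidx n) x :
  pauli_string s x x = if sdiagP s then chi (setof s) x else 0.
Proof.
rewrite /Defs.pauli_string /sdiagP; case: forallP => [h|].
  rewrite /Defs.chi [RHS]big_mkcond /=; apply: eq_bigr => k _.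
  rewrite pauli_diag inE; have := h k; case: (s k == ord0) => //= /eqP ->.
  by rewrite eqxx.
move=> /forallP; rewrite negb_forall => /existsP [k]; rewrite negb_or => /andP [h1 h2].
by rewrite (bigD1 k) //= pauli_diag (negbTE h1) (negbTE h2) mul0r.
Qed.

Lemma pcoef_diag n (f : cube n -> C) s :
  pcoef (diag f) s = if sdiagP s then fourier f (setof s) else 0.
Proof.
rewrite /pcoef /fourier.
have -> : \sum_x \sum_y pauli_string s x y * diag f y x = \sum_x pauli_string s x x * f x.
  apply: eq_bigr => x _; rewrite (bigD1 x) //= /diag eqxx big1 ?addr0 // => y /negbTE.
  by move=> ->; rewrite mulr0.
case: ifP => h.
  by congr (_ * _); apply: eq_bigr => x _; rewrite pstring_diag h mulrC.
by rewrite big1 ?mulr0 // => x _; rewrite pstring_diag h mul0r.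
Qed.

Lemma hS_diag n (S : {set 'I_n}) : sdiagP (hS S).
Proof. by apply/forallP => k; rewrite /hS ffunE; case: (k \in S); rewrite eqxx ?orbT. Qed.

Lemma setof_hS n (S : {set 'I_n}) : setof (hS S) = S.
Proof. by apply/setP => k; rewrite /setof inE /hS ffunE; case: (k \in S). Qed.

Lemma hS_setof n (s : pidx n) : sdiagP s -> hS (setof s) = s.
Proof.
move=> /forallP h; apply/ffunP => k; rewrite /hS /setof ffunE inE.
by have := h k; case/orP => /eqP ->.
Qed.

Lemma pweightE n (s : pidx n) : pweight s = #|setof s|.
Proof.
apply: eq_card => k; rewrite /setof inE; apply/idP/idP => h.
  by move: h; rewrite classical_sets.in_setE.
by rewrite classical_sets.in_setE.
Qed.

Lemma sum_diag n (f : cube n -> C) (r : R) :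
  \sum_s normc (pcoef (diag f) s) * r ^+ pweight s =
  \sum_(S : {set 'I_n}) normc (fourier f S) * r ^+ #|S|.
Proof.
rewrite (bigID (fun s => sdiagP s)) /= [X in _ + X]big1 ?addr0; last first.
  by move=> s /negbTE h; rewrite pcoef_diag h ComplexField.Normc.normc0 mul0r.
rewrite (reindex_onto (@hS n) (@setof n)) /=; last by move=> s; exact: hS_setof.
apply: eq_big => S; first by rewrite setof_hS eqxx hS_diag.
by move=> _; rewrite pcoef_diag hS_diag /= pweightE setof_hS.
Qed.

Lemma qBr_diag n (f : cube n -> C) : qBr (diag f) = Br f.
Proof.
rewrite /qBr /Br opnorm_diag.
suff -> : [set r : R | 0 < r /\ \sum_s normc (pcoef (diag f) s) * r ^+ pweight s = supnorm f]%classic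
  = [set r : R | 0 < r /\ \sum_(S : {set 'I_n}) normc (fourier f S) * r ^+ #|S| = supnorm f]%classic by [].
by apply/funext => r /=; rewrite sum_diag.
Qed.

Lemma diag_class c d n (f : cube n -> C) :
  in_class c d (fun S : {set 'I_n} => #|S|) (fourier f) ->
  in_class c d (@pweight n) (pcoef (diag f)).
Proof.
apply: in_class_transfer => s; rewrite pcoef_diag; case: ifP => [_ h|_]; last by rewrite eqxx.
by exists (setof s); split; [|rewrite pweightE].
Qed.

End P1.

Lemma part1 (R : realType) c d n : (qBr_class R c d n <= Br_class R c d n)%E.
Proof.
apply: le_ereal_inf_tmp => _ [f hf <-]; apply: ereal_inf_lbound.
exists (diag f); first exact: diag_class.
exact: qBr_diag.
Qed.

Section P2a.
Variable R : realType.
Local Notation C := R[i].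
Local Notation normc := (@ComplexField.Normc.normc R).
Local Notation sgnb := (@sgnb R).
Local Notation chi := (@chi R).
Local Notation pauli := (@pauli R).
Local Notation pauli_string := (@pauli_string R).
Local Notation delta := (@delta R).

Lemma chi_mk m (S : {set 'I_m}) x :
  chi S x = \prod_j (if j \in S then sgnb (x j) else 1).
Proof. by rewrite /Defs.chi big_mkcond. Qed.

Lemma sum_chi_chi m (S T : {set 'I_m}) :
  \sum_(x : cube m) chi S x * chi T x = if S == T then 2%:R ^+ m else 0.
Proof.
pose F (j : 'I_m) (b : bool) : C :=
  (if j \in S then sgnb b else 1) * (if j \in T then sgnb b else 1).
have -> : \sum_(x : cube m) chi S x * chi T x = \sum_(x : cube m) \prod_j F j (x j).
  by apply: eq_bigr => x _; rewrite !chi_mk -big_split.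
rewrite -bigA_distr_bigA /=.
have hF : forall j, \sum_b F j b = if (j \in S) == (j \in T) then 2%:R else 0.
  move=> j; rewrite big_bool /F /Defs.sgnb.
  by case: (j \in S); case: (j \in T) => /=; rewrite ?mulr1 ?mul1r ?mulrN ?mulNr ?opprK ?mulr1 ?addrN ?subrr ?addNr.
under eq_bigr => j _ do rewrite hF.
case: eqP => [->|neq].
  by rewrite (eq_bigr (fun _ => 2%:R)) ?prodr_const ?card_ord // => j _; rewrite eqxx.
have [j hj] : exists j, (j \in S) != (j \in T).
  case: (boolP [exists j, (j \in S) != (j \in T)]) => [/existsP //|/existsPn h].
  by exfalso; apply: neq; apply/setP => j; have := h j; rewrite negbK => /eqP.
by rewrite (bigD1 j) //= (negbTE hj) mul0r.
Qed.

Section Comb.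
Variables (m : nat) (I : finType) (c : I -> C) (T : I -> {set 'I_m}).
Hypothesis injT : injective T.

Definition gcomb (x : cube m) : C := \sum_i c i * chi (T i) x.

Lemma fourier_gcomb t :
  fourier gcomb t = \sum_i c i * (if T i == t then 1 else 0).
Proof.
rewrite /fourier /gcomb.
under eq_bigr => x _ do rewrite mulr_suml.
rewrite exchange_big mulr_sumr /=; apply: eq_bigr => i _.
under eq_bigr => x _ do rewrite -mulrA.
rewrite -mulr_sumr sum_chi_chi mulrCA; case: eqP => _.
  by rewrite mulVf ?mulr1 // expf_neq0 // pnatr_eq0.
by rewrite !mulr0.
Qed.

Lemma fourier_gcomb_T i : fourier gcomb (T i) = c i.
Proof.
rewrite fourier_gcomb (bigD1 i) //= eqxx mulr1 big1 ?addr0 // => j hj.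
by rewrite (inj_eq injT) (negbTE hj) mulr0.
Qed.

Lemma fourier_gcomb_out t : (forall i, T i != t) -> fourier gcomb t = 0.
Proof.
by move=> h; rewrite fourier_gcomb big1 // => i _; rewrite (negbTE (h i)) mulr0.
Qed.

Lemma sum_gcomb (r : R) :
  \sum_(t : {set 'I_m}) normc (fourier gcomb t) * r ^+ #|t| =
  \sum_i normc (c i) * r ^+ #|T i|.
Proof.
rewrite (bigID (fun t => t \in T @: setTfor I)) /= [X in _ + X]big1 ?addr0; last first.
  move=> t ht; rewrite fourier_gcomb_out ?ComplexField.Normc.normc0 ?mul0r //.
  move=> i; apply: contra ht => /eqP <-; exact: imset_f.
rewrite big_imset /=; last by move=> i j _ _; exact: injT.
by apply: eq_big => [i|i _]; rewrite ?inE // fourier_gcomb_T.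
Qed.

Lemma gcomb_class cl d (wt : I -> nat) :
  (forall i, #|T i| = wt i) -> in_class cl d wt c ->
  in_class cl d (fun S : {set 'I_m} => #|S|) (fourier gcomb).
Proof.
move=> hw; apply: in_class_transfer => t ht.
case: (boolP [exists i, T i == t]) => [/existsP [i /eqP hi]|/existsPn h].
  by exists i; rewrite -hi fourier_gcomb_T in ht; split => //; rewrite -hi hw.
by rewrite fourier_gcomb_out ?eqxx in ht.
Qed.

End Comb.

End P2a.

Section P2b.
Variable R : realType.
Local Notation C := R[i].
Local Notation normc := (@ComplexField.Normc.normc R).
Local Notation sgnb := (@sgnb R).
Local Notation chi := (@chi R).
Local Notation pauli := (@pauli R).
Local Notation pauli_string := (@pauli_string R).
Local Notation delta := (@delta R).

Variable n : nat.

Lemma cardF : #|{: 'I_n * 'I_3}| = (3 * n)%N.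
Proof. by rewrite card_prod !card_ord mulnC. Qed.

Definition e3 (p : 'I_n * 'I_3) : 'I_(3 * n) := cast_ord cardF (enum_rank p).

Lemma e3_inj : injective e3.
Proof. by move=> p q /cast_ord_inj /enum_rank_inj. Qed.

Definition unl (a : 'I_4) : 'I_3 := odflt ord0 (unlift ord0 a).

Lemma lift_unl (a : 'I_4) : a != ord0 -> lift ord0 (unl a) = a.
Proof. by move=> ha; rewrite eq_sym in ha; case: (unlift_some ha) => j hj h; rewrite /unl h. Qed.

Lemma unl_lift (j : 'I_3) : unl (lift ord0 j) = j.
Proof. by rewrite /unl liftK. Qed.

Definition Qs (s : pidx n) : {set 'I_n * 'I_3} := [set p | s p.1 == lift ord0 p.2].

Definition Ts (s : pidx n) : {set 'I_(3 * n)} := e3 @: Qs s.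

Lemma Qs_img (s : pidx n) : Qs s = (fun k => (k, unl (s k))) @: setof s.
Proof.
apply/setP => [[k j]]; rewrite !inE /=; apply/idP/idP.
  move=> /eqP h; apply/imsetP; exists k; first by rewrite inE h -[_ != _]/(lift _ _ != ord0) ?neq_lift.
  by rewrite h unl_lift.
move=> /imsetP [k' hk' [-> ->]]; move: hk'; rewrite inE => hk'.
by rewrite lift_unl.
Qed.

Lemma card_Ts (s : pidx n) : #|Ts s| = pweight s.
Proof.
rewrite /Ts card_imset; last exact: e3_inj.
rewrite Qs_img card_imset ?pweightE // => k k' [] //.
Qed.

Lemma Ts_inj : injective Ts.
Proof.
move=> s s' /(imset_inj e3_inj) hQ; apply/ffunP => k.
have key : forall (s1 s2 : pidx n), Qs s1 = Qs s2 -> s1 k != ord0 -> s2 k = s1 k.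
  move=> s1 s2 hQ' h1.
  have : (k, unl (s1 k)) \in Qs s1 by rewrite inE /= lift_unl.
  by rewrite hQ' inE /= lift_unl // => /eqP.
case: (eqVneq (s k) ord0) => h1; last by rewrite (key s s').
case: (eqVneq (s' k) ord0) => h2; first by rewrite h1 h2.
by rewrite (key s' s).
Qed.

Definition Wf (x : cube (3 * n)) (k : 'I_n) (a : 'I_4) : C :=
  \prod_(j : 'I_3) (if a == lift ord0 j then sgnb (x (e3 (k, j))) else 1).

Lemma chi_Ts (s : pidx n) x : chi (Ts s) x = \prod_k Wf x k (s k).
Proof.
rewrite /Defs.chi /Ts big_imset /=; last by move=> p q _ _; exact: e3_inj.
rewrite big_mkcond /= /Wf pair_big /=.
by apply: eq_bigr => [[k j]] _; rewrite inE.
Qed.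

Lemma Wf_lift x k j : Wf x k (lift ord0 j) = sgnb (x (e3 (k, j))).
Proof.
rewrite /Wf (bigD1 j) //= eqxx big1 ?mulr1 // => j' hj'.
by rewrite (inj_eq (@lift_inj _ ord0)) eq_sym (negbTE hj').
Qed.

End P2b.

Section P2c.
Variable R : realType.
Local Notation C := R[i].
Local Notation normc := (@ComplexField.Normc.normc R).
Local Notation sgnb := (@sgnb R).
Local Notation chi := (@chi R).
Local Notation pauli := (@pauli R).
Local Notation pauli_string := (@pauli_string R).
Local Notation delta := (@delta R).

Definition s2 : C := ((Num.sqrt (2 : R))^-1)%:C.
Definition sc (j : 'I_3) : C := if j == 2%N :> nat then 1 else s2.
Definition Ub (j : 'I_3) (l b : bool) : C :=
  match nat_of_ord j with
  | 0 => if b then sgnb l else 1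
  | 1 => if b then 'i%R * sgnb l else 1
  | _ => if b == l then 1 else 0
  end.
Definition Uv (j : 'I_3) (l b : bool) : C := sc j * Ub j l b.

Lemma s2s2 : s2 * s2 = 2%:R^-1.
Proof.
rewrite /s2 -rmorphM /= -invfM -expr2 sqr_sqrtr ?ler0n //.
by rewrite rmorphV ?unitfE ?pnatr_eq0 //= rmorph_nat.
Qed.

Lemma conj_i : conjc ('i%R : C) = - 'i%R.
Proof. by rewrite -complexiE; apply/eqP; rewrite eq_complex /= oppr0 !eqxx. Qed.

Lemma ii : ('i%R : C) * 'i%R = -1.
Proof. by rewrite -expr2 sqrCi. Qed.

Lemma conj_sgnb l : conjc (sgnb l) = sgnb l.
Proof. by case: l; rewrite /Defs.sgnb ?rmorphN rmorph1. Qed.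

Lemma conjM' (x y : C) : conjc (x * y) = conjc x * conjc y.
Proof. exact: rmorphM. Qed.
Lemma conjN' (x : C) : conjc (- x) = - conjc x.
Proof. exact: rmorphN. Qed.
Lemma conj1' : conjc (1 : C) = 1.
Proof. exact: rmorph1. Qed.
Lemma conj0' : conjc (0 : C) = 0.
Proof. exact: rmorph0. Qed.

Lemma lit1 : (Complex (-1) (- - 0) : C) = -1.
Proof. by apply/eqP; rewrite eq_complex /= !oppr0 !eqxx. Qed.

Lemma conj_if (b : bool) (x y : C) : conjc (if b then x else y) = if b then conjc x else conjc y.
Proof. by case: b. Qed.

Lemma key1 (j : 'I_3) (l u w : bool) :
  (pauli (lift ord0 j) u w * sgnb l + pauli ord0 u w) / 2%:R =
  Uv j l u * conjc (Uv j l w).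
Proof.
rewrite /Uv conjM' mulrACA.
have -> : conjc (sc j) = sc j by rewrite /sc /s2; case: ifP => _; rewrite ?rmorph1 ?conjc_real.
have h2 : (2%:R : C) != 0 by rewrite pnatr_eq0.
case: j => [[|[|[|j]]] hj] //; rewrite /sc /Ub /=; rewrite ?s2s2 ?mul1r;
  rewrite !conj_if ?conjM' ?conj1' ?conj0' ?conj_i ?conj_sgnb;
  case: l; case: u; case: w; rewrite /Defs.pauli /Defs.sgnb /=.
all: rewrite ?lit1 ?mulrN1 ?mulN1r ?opprK ?mulNr ?mulrN ?ii ?opprK ?mulr1 ?mul1r ?mul0r ?mulr0 ?ii.
all: by field.
Qed.


Lemma conj_prod' (I : finType) (F : I -> C) : conjc (\prod_i F i) = \prod_i conjc (F i).
Proof. exact: rmorph_prod. Qed.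

Lemma key2 (lam : 'I_3 -> bool) (V : 'I_4 -> C) (u w : bool) :
  V ord0 = 1 -> (forall j, V (lift ord0 j) = 3%:R^-1 * sgnb (lam j)) ->
  2%:R^-1 * \sum_a pauli a u w * V a =
  \sum_j 3%:R^-1 * (Uv j (lam j) u * conjc (Uv j (lam j) w)).
Proof.
move=> V0 Vl.
under [RHS]eq_bigr => j _ do rewrite -key1.
rewrite big_ord_recl V0 mulr1 mulrDr.
rewrite (eq_bigr (fun i : 'I_3 => pauli (lift ord0 i) u w * (3%:R^-1 * sgnb (lam i)))); last by move=> i _; rewrite Vl.
rewrite mulr_sumr.
have -> : \sum_(j < 3) 3%:R^-1 * ((pauli (lift ord0 j) u w * sgnb (lam j) + pauli ord0 u w) / 2%:R)
  = \sum_(j < 3) (2%:R^-1 * (pauli (lift ord0 j) u w * (3%:R^-1 * sgnb (lam j))) + 3%:R^-1 * (2%:R^-1 * pauli ord0 u w)).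
  by apply: eq_bigr => j _; rewrite mulrDl mulrDr; congr (_ + _); rewrite /=; ring.
rewrite big_split /= sumr_const card_ord addrC; congr (_ + _).
have h3 : (3%:R : C) != 0 by rewrite pnatr_eq0.
by rewrite -mulr_natr; field.
Qed.

Section Main.
Variables (n : nat) (A : qop R n) (lam : 'I_n -> 'I_3 -> bool) (V : 'I_n -> 'I_4 -> C).
Hypothesis V0 : forall k, V k ord0 = 1.
Hypothesis Vl : forall k j, V k (lift ord0 j) = 3%:R^-1 * sgnb (lam k j).

Definition psi (J : {ffun 'I_n -> 'I_3}) (y : cube n) : C :=
  \prod_k Uv (J k) (lam k (J k)) (y k).

Lemma E1 y z : 2%:R^-1 ^+ n * \sum_(s : pidx n) pauli_string s y z * \prod_k V k (s k) =
  \sum_(J : {ffun 'I_n -> 'I_3}) 3%:R^-1 ^+ n * (psi J y * conjc (psi J z)).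
Proof.
have -> : \sum_(s : pidx n) pauli_string s y z * \prod_k V k (s k) =
          \prod_k \sum_a pauli a (y k) (z k) * V k a.
  rewrite bigA_distr_bigA /=; apply: eq_bigr => s _.
  by rewrite /Defs.pauli_string -big_split.
have -> : (2%:R^-1 : C) ^+ n = \prod_(k < n) 2%:R^-1 by rewrite prodr_const card_ord.
rewrite -big_split /=.
under eq_bigr => k _ do rewrite (key2 (y k) (z k) (V0 k) (Vl k)).
rewrite bigA_distr_bigA /=; apply: eq_bigr => J _.
rewrite big_split /= prodr_const card_ord; congr (_ * _).
by rewrite /psi conj_prod' -big_split.
Qed.

Lemma main_id :
  \sum_s pcoef A s * \prod_k V k (s k) =
  \sum_(J : {ffun 'I_n -> 'I_3}) 3%:R^-1 ^+ n * \sum_z conjc (psi J z) * apply A (psi J) z.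
Proof.
have step1 : \sum_s pcoef A s * \prod_k V k (s k) =
   \sum_y \sum_z (2%:R^-1 ^+ n * \sum_(s : pidx n) pauli_string s y z * \prod_k V k (s k)) * A z y.
  have -> : \sum_s pcoef A s * \prod_k V k (s k) =
     \sum_s \sum_y \sum_z (2%:R^-1 ^+ n * (pauli_string s y z * \prod_k V k (s k))) * A z y.
    apply: eq_bigr => s _; rewrite /pcoef -mulrA mulr_suml mulr_sumr; apply: eq_bigr => y _.
    rewrite mulr_suml mulr_sumr; apply: eq_bigr => z _; rewrite exprVn; ring.
  rewrite exchange_big; apply: eq_bigr => y _; rewrite exchange_big; apply: eq_bigr => z _.
  by rewrite -mulr_suml -mulr_sumr.
rewrite step1.
under eq_bigr => y _ do under eq_bigr => z _ do rewrite E1 mulr_suml.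
under [RHS]eq_bigr => J _ do rewrite mulr_sumr.
rewrite exchange_big /=.
under eq_bigr => z _ do rewrite exchange_big /=.
rewrite exchange_big /=; apply: eq_bigr => J _; apply: eq_bigr => z _.
rewrite /apply mulr_sumr mulr_sumr; apply: eq_bigr => y _; ring.
Qed.


Lemma normc_prod (I : finType) (F : I -> C) : normc (\prod_i F i) = \prod_i normc (F i).
Proof.
apply: (big_morph (fun z : C => normc z)) => [x y|]; first exact: normcM'.
exact: ComplexField.Normc.normc1.
Qed.

Lemma normcX (x : C) m : normc (x ^+ m) = normc x ^+ m.
Proof.
elim: m => [|m IH]; first by rewrite !expr0 ComplexField.Normc.normc1.
by rewrite !exprS normcM' IH.
Qed.

Lemma normc_nat m : normc (m%:R : C) = m%:R.
Proof. by rewrite -(rmorph_nat (real_complex R)) normcC ger0_norm. Qed.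

Lemma normc_s2 : normc s2 ^+ 2 = 2%:R^-1.
Proof. by rewrite /s2 normcC ger0_norm ?invr_ge0 ?sqrtr_ge0 // exprVn sqr_sqrtr ?ler0n. Qed.

Lemma sum_bool' (F : bool -> R) : \sum_b F b = F true + F false.
Proof. by rewrite big_bool. Qed.

Lemma sumU (j : 'I_3) l : \sum_b normc (Uv j l b) ^+ 2 = 1.
Proof.
rewrite sum_bool' /Uv !normcM' !exprMn -mulrDr.
have h2 : (2%:R : R) != 0 by rewrite pnatr_eq0.
have [->|->|->] : [\/ j = Ordinal (isT : (0 < 3)%N), j = Ordinal (isT : (1 < 3)%N) | j = Ordinal (isT : (2 < 3)%N)].
    case: j => [[|[|[|j]]] hj] //.
    + by constructor 1; apply: val_inj.
    + by constructor 2; apply: val_inj.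
    + by constructor 3; apply: val_inj.
- rewrite (_ : sc _ = s2) // normc_s2.
  rewrite (_ : Ub _ l true = sgnb l) // (_ : Ub _ l false = 1) //.
  by rewrite normc_sgnb ComplexField.Normc.normc1 expr1n -mulr2n -mulr_natr mulVf.
- rewrite (_ : sc _ = s2) // normc_s2.
  rewrite (_ : Ub _ l true = 'i%R * sgnb l) // (_ : Ub _ l false = 1) //.
  rewrite normcM' -complexiE normc_i normc_sgnb ComplexField.Normc.normc1 mulr1 expr1n.
  by rewrite -mulr2n -mulr_natr mulVf.
- rewrite (_ : sc _ = 1) // ComplexField.Normc.normc1 expr1n mul1r.
  rewrite (_ : Ub _ l true = if true == l then 1 else 0) // (_ : Ub _ l false = if false == l then 1 else 0) //.
  by case: l => /=; rewrite !expr0n /= ?expr1n !addr0 ?sqrtr1 ?sqrtr0 ?expr1n ?expr0n /= ?addr0 ?add0r.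
Qed.

Lemma vnorm_psi J : vnorm (psi J) = 1.
Proof.
rewrite /vnorm.
have -> : \sum_x normc (psi J x) ^+ 2 = \prod_k \sum_b normc (Uv (J k) (lam k (J k)) b) ^+ 2.
  rewrite bigA_distr_bigA /=; apply: eq_bigr => y _.
  by rewrite /psi normc_prod prodrXl.
by rewrite big1 ?sqrtr1 // => k _; rewrite sumU.
Qed.

Lemma main_bound : normc (\sum_s pcoef A s * \prod_k V k (s k)) <= opnorm A.
Proof.
rewrite main_id; apply: le_trans (normc_sum _ _ _) _.
have hc : normc ((3%:R : C)^-1 ^+ n) = 3%:R^-1 ^+ n.
  by rewrite normcX ComplexField.Normc.normcV normc_nat.
apply: (@le_trans _ _ (\sum_(J : {ffun 'I_n -> 'I_3}) 3%:R^-1 ^+ n * opnorm A)).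
  apply: ler_sum => J _; rewrite normcM' hc; apply: ler_wpM2l.
    by rewrite exprn_ge0 // invr_ge0 ler0n.
  apply: le_trans (CS_complex _ _) _; rewrite vnorm_psi mul1r.
  exact: opnorm_ub (vnorm_psi J).
by rewrite sumr_const card_ffun !card_ord -mulrnAl -mulr_natl natrX -exprMn mulfV ?pnatr_eq0 // expr1n mul1r.
Qed.

End Main.

End P2c.

Section P2d.
Variable R : realType.
Local Notation C := R[i].
Local Notation normc := (@ComplexField.Normc.normc R).
Local Notation sgnb := (@sgnb R).
Local Notation chi := (@chi R).
Local Notation pauli := (@pauli R).
Local Notation pauli_string := (@pauli_string R).
Local Notation delta := (@delta R).
Local Notation Wf := (@Wf R).

Variables (n : nat) (A : qop R n).

Definition cA (s : pidx n) : C := pcoef A s * 3%:R^-1 ^+ pweight s.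
Definition gA : cube (3 * n) -> C := gcomb cA (@Ts n).

Lemma prod_if_pw (s : pidx n) (a : C) :
  \prod_k (if s k == ord0 then 1 else a) = a ^+ pweight s.
Proof.
rewrite pweightE -prodr_const [RHS]big_mkcond /=; apply: eq_bigr => k _.
by rewrite /setof inE; case: eqP.
Qed.

Lemma Wf0 (x : cube (3 * n)) (k : 'I_n) : Wf x k ord0 = 1.
Proof. by rewrite /Wf big1 // => j _; rewrite eq_sym (negbTE (neq_lift _ _)). Qed.

Lemma g_bound (x : cube (3 * n)) : normc (gA x) <= opnorm A.
Proof.
pose V (k : 'I_n) (a : 'I_4) : C := if a == ord0 then 1 else 3%:R^-1 * Wf x k a.
have V0 : forall k, V k ord0 = 1 by move=> k; rewrite /V eqxx.
have Vl : forall k j, V k (lift ord0 j) = 3%:R^-1 * sgnb (x (e3 (k, j))).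
  move=> k j; have hl : (lift ord0 j == ord0) = false by rewrite eq_sym (negbTE (neq_lift _ _)).
  by rewrite /V hl Wf_lift.
have -> : gA x = \sum_s pcoef A s * \prod_k V k (s k).
  rewrite /gA /gcomb; apply: eq_bigr => s _; rewrite /cA chi_Ts -mulrA; congr (_ * _).
  rewrite -prod_if_pw -big_split /=; apply: eq_bigr => k _.
  by rewrite /V; case: eqP => [->|_]; rewrite ?Wf0 ?mulr1.
exact: (main_bound A V0 Vl).
Qed.

Lemma g_supnorm : supnorm gA <= opnorm A.
Proof. by apply: supnorm_le; [exact: opnorm_ge0|exact: g_bound]. Qed.

Definition phiA (q : R) : R := \sum_s normc (pcoef A s) * q ^+ pweight s.

Lemma g_sum (r : R) :
  \sum_(t : {set 'I_(3 * n)}) normc (fourier gA t) * r ^+ #|t| = phiA (r / 3%:R).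
Proof.
rewrite /gA (sum_gcomb cA (@Ts_inj n)) /phiA; apply: eq_bigr => s _.
rewrite card_Ts /cA normcM' normcX ComplexField.Normc.normcV normc_nat exprMn exprVn.
by rewrite -exprVn; ring.
Qed.

Lemma g_class c d : in_class c d (@pweight n) (pcoef A) ->
  in_class c d (fun S : {set 'I_(3 * n)} => #|S|) (fourier gA).
Proof.
move=> h; apply: (gcomb_class (@Ts_inj n) (wt := @pweight n)); first exact: card_Ts.
apply: in_class_transfer h => s hs; exists s; split => //.
by apply: contraNneq hs => h0; rewrite /cA h0 mul0r.
Qed.

End P2d.

Section P2e.
Variable R : realType.
Local Notation C := R[i].
Local Notation normc := (@ComplexField.Normc.normc R).
Local Notation sgnb := (@sgnb R).
Local Notation chi := (@chi R).
Local Notation pauli := (@pauli R).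
Local Notation pauli_string := (@pauli_string R).
Local Notation delta := (@delta R).
Local Notation Wf := (@Wf R).

Lemma key3 (p q u v : bool) :
  \sum_(a : 'I_4) pauli a p q * pauli a u v = if (p == v) && (q == u) then 2%:R else 0.
Proof.
rewrite !big_ord_recl big_ord0.
case: p; case: q; case: u; case: v; rewrite /Defs.pauli /=;
  rewrite ?mulr0 ?mul0r ?mulr1 ?mul1r ?addr0 ?add0r ?mulrN ?mulNr ?ii ?opprK.
all: by rewrite ?mulr1 ?subrr.
Qed.


Section Compl.
Variables (n : nat) (A : qop R n).

Lemma pauli_complete x y : A x y = \sum_s pcoef A s * pauli_string s x y.
Proof.
have step1 : \sum_s pcoef A s * pauli_string s x y =
   \sum_y' \sum_z' ((2%:R ^+ n)^-1 * \sum_(s : pidx n) pauli_string s y' z' * pauli_string s x y) * A z' y'.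
  have -> : \sum_s pcoef A s * pauli_string s x y =
     \sum_s \sum_y' \sum_z' ((2%:R ^+ n)^-1 * (pauli_string s y' z' * pauli_string s x y)) * A z' y'.
    apply: eq_bigr => s _; rewrite /pcoef -mulrA mulr_suml mulr_sumr; apply: eq_bigr => y' _.
    rewrite mulr_suml mulr_sumr; apply: eq_bigr => z' _; ring.
  rewrite exchange_big; apply: eq_bigr => y' _; rewrite exchange_big; apply: eq_bigr => z' _.
  by rewrite -mulr_suml -mulr_sumr.
rewrite step1.
have inner : forall y' z' : cube n,
   (2%:R ^+ n)^-1 * \sum_(s : pidx n) pauli_string s y' z' * pauli_string s x y =
   if (y' == y) && (z' == x) then 1 else 0.
  move=> y' z'.
  have -> : \sum_(s : pidx n) pauli_string s y' z' * pauli_string s x y =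
            \prod_k \sum_a pauli a (y' k) (z' k) * pauli a (x k) (y k).
    rewrite bigA_distr_bigA /=; apply: eq_bigr => s _.
    by rewrite /Defs.pauli_string -big_split.
  under eq_bigr => k _ do rewrite key3.
  case: (boolP ((y' == y) && (z' == x))) => [/andP [/eqP -> /eqP ->]|hne].
    rewrite (eq_bigr (fun _ => 2%:R)); last by move=> k _; rewrite !eqxx.
    by rewrite prodr_const card_ord mulVf // expf_neq0 // pnatr_eq0.
  have [k hk] : exists k, ~~ ((y' k == y k) && (z' k == x k)).
    case: (boolP [exists k, ~~ ((y' k == y k) && (z' k == x k))]) => [/existsP //|/existsPn h].
    exfalso; move: hne; rewrite negb_and => /orP [] /eqP; apply.
      by apply/ffunP => k; have := h k; rewrite negbK => /andP [/eqP].
    by apply/ffunP => k; have := h k; rewrite negbK => /andP [_ /eqP].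
  by rewrite (bigD1 k) //= (negbTE hk) mul0r mulr0.
under eq_bigr => y' _ do under eq_bigr => z' _ do rewrite inner.
rewrite (bigD1 y) //= [X in _ + X]big1 ?addr0; last first.
  by move=> y' /negbTE hy; apply: big1 => z' _; rewrite hy mul0r.
rewrite (bigD1 x) //= [X in _ + X]big1 ?addr0; last first.
  by move=> z' /negbTE hz; rewrite eqxx hz mul0r.
by rewrite !eqxx mul1r.
Qed.

Definition s0 : pidx n := [ffun => ord0].

Lemma pweight_s0 : pweight s0 = 0%N.
Proof.
rewrite pweightE; apply/eqP; rewrite cards_eq0; apply/eqP/setP => k.
by rewrite /setof !inE ffunE eqxx.
Qed.

Lemma scalar_case : (forall s, s != s0 -> pcoef A s = 0) ->
  opnorm A = normc (pcoef A s0) /\ forall q, phiA A q = normc (pcoef A s0).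
Proof.
move=> h; split.
  suff -> : opnorm A = opnorm (diag (fun _ : cube n => pcoef A s0)).
    rewrite opnorm_diag; have [x ->] := supnorm_arg (fun _ : cube n => pcoef A s0).
    by [].
  congr opnorm.
    apply/funext => x; apply/funext => y; rewrite pauli_complete (bigD1 s0) //= big1 ?addr0; last first.
      by move=> s hs; rewrite h // mul0r.
    rewrite /diag /Defs.pauli_string /s0.
    case: eqP => [->|hxy].
      by rewrite big1 ?mulr1 // => k _; rewrite ffunE /Defs.pauli /= eqxx.
    have [k hk] : exists k, x k != y k.
      case: (boolP [exists k, x k != y k]) => [/existsP //|/existsPn h'].
      by exfalso; apply: hxy; apply/ffunP => k; have := h' k; rewrite negbK => /eqP.
    by rewrite (bigD1 k) //= ffunE /Defs.pauli /= (negbTE hk) mul0r mulr0.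
move=> q; rewrite /phiA (bigD1 s0) //= big1 ?addr0 ?pweight_s0 ?expr0 ?mulr1 //.
by move=> s hs; rewrite h // ComplexField.Normc.normc0 mul0r.
Qed.

End Compl.

End P2e.

Section P2f.
Variable R : realType.
Local Notation C := R[i].
Local Notation normc := (@ComplexField.Normc.normc R).
Local Notation sgnb := (@sgnb R).
Local Notation chi := (@chi R).
Local Notation pauli := (@pauli R).
Local Notation pauli_string := (@pauli_string R).
Local Notation delta := (@delta R).
Local Notation Wf := (@Wf R).

Variables (n : nat) (A : qop R n).

Lemma phiA_horner : phiA A = horner (\sum_s normc (pcoef A s) *: 'X^(pweight s)).
Proof.
apply/funext => q; rewrite /phiA horner_sum; apply: eq_bigr => s _.
by rewrite hornerZ hornerXn.
Qed.

Lemma phiA_ge_term s q : 0 <= q -> normc (pcoef A s) * q ^+ pweight s <= phiA A q.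
Proof.
move=> q0; rewrite /phiA (bigD1 s) //= lerDl; apply: sumr_ge0 => s' _.
by apply: mulr_ge0; [exact: normc_ge0|exact: exprn_ge0].
Qed.

Lemma exists_root (t : R) : 0 < t -> phiA A t <= opnorm A ->
  exists q, [/\ t <= q, 0 < q & phiA A q = opnorm A].
Proof.
move=> t0 ht.
case: (boolP [exists s, (s != s0 n) && (pcoef A s != 0)]) => [/existsP [s1 /andP [hs1 hc1]]|/existsPn h].
  pose a1 := normc (pcoef A s1).
  have a10 : 0 < a1.
    rewrite lt_def normc_ge0 andbT; apply: contra hc1 => /eqP h0.
    by apply/eqP; exact: ComplexField.Normc.eq0_normc.
  have w1 : (0 < pweight s1)%N.
    rewrite pweightE card_gt0; apply: contraNneq hs1 => h0.
    apply/eqP/ffunP => k; rewrite ffunE; apply/eqP.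
    have : k \notin setof s1 by rewrite h0 inE.
    by rewrite /setof inE negbK.
  pose Q := t + 1 + opnorm A / a1.
  have hop := opnorm_ge0 A.
  have hd : 0 <= opnorm A / a1 by rewrite divr_ge0 // ltW.
  have hQ1 : 1 <= Q by rewrite /Q; lra.
  have htQ : t <= Q by rewrite /Q; lra.
  have hQ : opnorm A <= phiA A Q.
    apply: le_trans (phiA_ge_term s1 (le_trans ler01 hQ1)).
    have hQw : Q <= Q ^+ pweight s1.
      rewrite -(prednK w1) exprS -[X in X <= _]mulr1 ler_wpM2l ?exprn_ege1 //.
      exact: le_trans ler01 hQ1.
    apply: le_trans (ler_wpM2l (ltW a10) hQw).
    have e : a1 * (opnorm A / a1) = opnorm A by rewrite mulrCA mulfV ?mulr1 // gt_eqF.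
    rewrite /Q !mulrDr e mulr1; have := mulr_ge0 (ltW a10) (ltW t0); lra.
  have hcont : {within `[t, Q], continuous (phiA A)}%classic.
    by apply: continuous_subspaceT; rewrite phiA_horner; exact: continuous_horner.
  have hv : Num.min (phiA A t) (phiA A Q) <= opnorm A <= Num.max (phiA A t) (phiA A Q).
    by rewrite ge_min ht /= le_max hQ orbT.
  have [q hq hphi] := IVT htQ hcont hv.
  move: hq; rewrite in_itv /= => /andP [h1 h2].
  by exists q; split => //; apply: lt_le_trans h1.
have hsc : forall s, s != s0 n -> pcoef A s = 0.
  by move=> s hs; have := h s; rewrite hs /= negbK => /eqP.
have [E1 E2] := scalar_case hsc.
by exists t; split => //; rewrite E1 E2.
Qed.

End P2f.

Section Fin.
Variable R : realType.
Local Notation C := R[i].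
Local Notation normc := (@ComplexField.Normc.normc R).
Local Notation sgnb := (@sgnb R).
Local Notation chi := (@chi R).
Local Notation pauli := (@pauli R).
Local Notation pauli_string := (@pauli_string R).
Local Notation delta := (@delta R).
Local Notation Wf := (@Wf R).

Lemma Br_g_le n (A : qop R n) : (Br (gA A) <= 3%:E * qBr A)%E.
Proof.
rewrite /Br; apply: ge_ereal_sup => _ [r [r0 hr] <-].
rewrite g_sum in hr.
have h3 : (0 : R) < 3%:R by rewrite ltr0n.
have hr3 : 0 < r / 3%:R by rewrite divr_gt0.
have hle : phiA A (r / 3%:R) <= opnorm A by rewrite hr; exact: g_supnorm.
have [q [hq1 hq2 hq3]] := exists_root hr3 hle.
have hq : (q%:E <= qBr A)%E by apply: ereal_sup_ubound; exists q.
have -> : r%:E = (3%:R%:E * (r / 3%:R)%:E)%E by rewrite -EFinM mulrC divfK // gt_eqF.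
apply: (@le_trans _ _ (3%:R%:E * q%:E)%E).
  by apply: lee_wpmul2l; rewrite ?lee_fin ?ler0n.
by apply: lee_wpmul2l; rewrite ?lee_fin ?ler0n.
Qed.

End Fin.

Lemma part2 (R : realType) c d n :
  (Br_class R c d (3 * n) <= 3%:E * qBr_class R c d n)%E.
Proof.
set z := Br_class R c d (3 * n).
have h : forall A : qop R n, in_class c d (@pweight n) (pcoef A) -> (z <= 3%:E * qBr A)%E.
  move=> A hA; apply: le_trans (Br_g_le A); apply: ereal_inf_lbound.
  by exists (gA A) => //; exact: g_class.
have h3 : (3%:R : R) != 0 by rewrite pnatr_eq0.
have h' : ((3%:R^-1)%:E * z <= qBr_class R c d n)%E.
  apply: le_ereal_inf_tmp => _ [A hA <-].
  apply: le_trans (lee_wpmul2l _ (h A hA)) _; first by rewrite lee_fin invr_ge0 ler0n.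
  by rewrite muleA -EFinM mulVf // mul1e.
have -> : z = (3%:E * ((3%:R^-1)%:E * z))%E by rewrite muleA -EFinM mulfV // mul1e.
by apply: lee_wpmul2l => //; rewrite lee_fin ler0n.
Qed.

Local Open Scope ring_scope.
Local Open Scope ereal_scope.

Theorem theorem4p4 (R : realType) (c : fclass) (d n : nat) :
  (1 <= d <= n)%N ->
  qBr_class R c d n <= Br_class R c d n /\
  Br_class R c d (3 * n) <= 3%:E * qBr_class R c d n.
Proof. by move=> _; split; [exact: part1|exact: part2]. Qed.
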